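(* Let $\mathcal S \subseteq U(4)$ be a set of two-qubit unitaries with the following property: for any $G_1,G_2,G_3 \in \mathcal S$ there exist $G_4,G_5,G_6\in\mathcal S$ with $$G_1^{(1)} G_2^{(2)} G_3^{(1)} = G_4^{(2)} G_5^{(1)} G_6^{(2)}$$ as operators on $(\mathbb C^2)^{\otimes 3}$, and conversely, for any $G_4,G_5,G_6\in\mathcal S$ there exist $G_1,G_2,G_3\in\mathcal S$ with the same equality. Then for any $A_1,\dots,A_6 \in \mathcal S$ there exist $B_1,\dots,B_6\in\mathcal S$ such that, as operators on $(\mathbb C^2)^{\otimes 4}$, $$A_6^{(2)}\,A_5^{(1)}A_4^{(3)}\,A_3^{(2)}\,A_2^{(1)}A_1^{(3)} \;=\; B_6^{(1)}B_5^{(3)}\,B_4^{(2)}\,B_3^{(1)}B_2^{(3)}\,B_1^{(2)}.$$ (In circuit language, read left to right in time: a four-qubit circuit whose four layers are {gates on qubits (1,2) and (3,4)}, {gate on (2,3)}, {gates on (1,2) and (3,4)}, {gate on (2,3)} equals a circuit with layers {gate on (2,3)}, {gates on (1,2) and (3,4)}, {gate on (2,3)}, {gates on (1,2) and (3,4)}, with gates from $\mathcal S$.)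
   Context: For a two-qubit unitary $G\in U(4)$ and a register of $n$ qubits, $G^{(i)}$ denotes $I_{2^{i-1}} \otimes G \otimes I_{2^{n-i-1}}$, i.e. $G$ acting on the adjacent qubits $i$ and $i+1$ and the identity elsewhere. Operator products act right to left (the rightmost factor is applied first). *)

(* Defs.v *)
From HB Require Import structures.
From mathcomp Require Import all_boot all_order all_algebra.
From mathcomp Require Import complex mxtens.
From mathcomp Require Import Rstruct.
Set Implicit Arguments. Unset Strict Implicit. Unset Printing Implicit Defensive.
Import Order.TTheory GRing.Theory Num.Theory.
Local Open Scope ring_scope.

Notation C := (complex Rdefinitions.R).
Definition C_nct : numClosedFieldType := C.

Definition adjmx (m n : nat) (A : 'M[C]_(m, n)) : 'M[C]_(n, m) :=
  (map_mx (fun z : C => z^*) A)^T.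

Definition unitary (d : nat) (A : 'M[C]_d) : Prop :=
  A *m adjmx A = 1%:M /\ adjmx A *m A = 1%:M.

(* G^{(i)} on n qubits: I_{2^(i-1)} (x) G (x) I_{2^(n-i-1)}, a 2^n x 2^n
   matrix (Kronecker product via mxtens.tensmx, standard row-major index
   convention, qubit 1 = most significant tensor factor).  conform_mx only
   serves to give it the type 'M_(2^n); for 1 <= i <= n-1 the dimensions
   agree and the result is exactly the Kronecker product. *)
Definition gate (n i : nat) (G : 'M[C]_4) : 'M[C]_(2 ^ n) :=
  conform_mx (0 : 'M[C]_(2 ^ n))
    ((1%:M : 'M[C]_(2 ^ (i - 1))) *t G *t (1%:M : 'M[C]_(2 ^ (n - i - 1)))).

(* Main.v *)
Require Import Defs.
From HB Require Import structures.
From mathcomp Require Import all_boot all_order all_algebra.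
From mathcomp Require Import complex mxtens Rstruct.
Import GRing.Theory.
Local Open Scope ring_scope.

Lemma castmx_closed (m n : nat) (e1 : m = m) (e2 : n = n) (A : 'M[C]_(m,n)) : castmx (e1,e2) A = A.
Proof. by rewrite (eq_irrelevance e1 erefl) (eq_irrelevance e2 erefl) castmx_id. Qed.

Lemma tensA m n p q r s (A : 'M[C]_(m,n)) (B : 'M[C]_(p,q)) (D : 'M[C]_(r,s)) :
  A *t (B *t D) = castmx (esym (mulnA m p r), esym (mulnA n q s)) (A *t B *t D).
Proof.
apply/matrixP => i j.
case: (mxtens_indexP i) => i1 i23; case: (mxtens_indexP i23) => i2 i3.
case: (mxtens_indexP j) => j1 j23; case: (mxtens_indexP j23) => j2 j3.
rewrite castmxE !tensmxE.
have -> : cast_ord (esym (esym (mulnA m p r))) (mxtens_index (i1, mxtens_index (i2, i3)))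
   = mxtens_index (mxtens_index (i1, i2), i3).
  by apply: val_inj => /=; rewrite mulnDl -mulnA addnA.
have -> : cast_ord (esym (esym (mulnA n q s))) (mxtens_index (j1, mxtens_index (j2, j3)))
   = mxtens_index (mxtens_index (j1, j2), j3).
  by apply: val_inj => /=; rewrite mulnDl -mulnA addnA.
by rewrite !tensmxE mulrA.
Qed.

Lemma tens11 m n : (1%:M : 'M[C]_m) *t (1%:M : 'M[C]_n) = 1%:M.
Proof.
apply/matrixP => i j.
case: (mxtens_indexP i) => i1 i2; case: (mxtens_indexP j) => j1 j2.
rewrite tensmxE !mxE (inj_eq (can_inj (@mxtens_indexK m n))) xpair_eqE.
by case: (i1 == j1); case: (i2 == j2); rewrite /= ?mulr1 ?mulr0 ?mul0r.
Qed.

Lemma tens1l m n (A : 'M[C]_(m,n)) :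
  (1%:M : 'M[C]_1) *t A = castmx (esym (mul1n m), esym (mul1n n)) A.
Proof.
apply/matrixP => i j.
case: (mxtens_indexP i) => i1 i2; case: (mxtens_indexP j) => j1 j2.
rewrite tensmxE castmxE [i1]ord1 [j1]ord1 mxE mul1r.
by congr (A _ _); apply: val_inj.
Qed.

Lemma tens1r m n (A : 'M[C]_(m,n)) :
  A *t (1%:M : 'M[C]_1) = castmx (esym (muln1 m), esym (muln1 n)) A.
Proof. by rewrite tens_mx_scalar scale1r. Qed.

Notation I2 := (1%:M : 'M[C]_2).
Notation I4 := (1%:M : 'M[C]_4).

Lemma g31 (G : 'M[C]_4) : gate 3 1 G = G *t I2.
Proof. by rewrite /gate conform_mx_id tens1l castmx_closed. Qed.
Lemma g32 (G : 'M[C]_4) : gate 3 2 G = I2 *t G.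
Proof. rewrite /gate conform_mx_id tens1r; exact: castmx_closed. Qed.
Lemma g41 (G : 'M[C]_4) : gate 4 1 G = G *t I4.
Proof. by rewrite /gate conform_mx_id tens1l castmx_closed. Qed.
Lemma g43 (G : 'M[C]_4) : gate 4 3 G = I4 *t G.
Proof. rewrite /gate conform_mx_id tens1r; exact: castmx_closed. Qed.
Lemma g42 (G : 'M[C]_4) : gate 4 2 G = I2 *t G *t I2.
Proof. by rewrite /gate conform_mx_id. Qed.

Lemma r1 (G : 'M[C]_4) : gate 4 1 G = gate 3 1 G *t I2.
Proof. rewrite g41 g31; have := tensA _ _ _ _ _ _ G I2 I2; rewrite tens11 castmx_closed; exact. Qed.
Lemma r2 (G : 'M[C]_4) : gate 4 2 G = gate 3 2 G *t I2.
Proof. by rewrite g42 g32. Qed.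
Lemma r3 (G : 'M[C]_4) : gate 4 2 G = I2 *t gate 3 1 G.
Proof. rewrite g42 g31; have := tensA _ _ _ _ _ _ I2 G I2; rewrite castmx_closed => H; exact: (esym H). Qed.
Lemma r4 (G : 'M[C]_4) : gate 4 3 G = I2 *t gate 3 2 G.
Proof. rewrite g43 g32; have := tensA _ _ _ _ _ _ I2 I2 G; rewrite castmx_closed tens11 => H; exact: (esym H). Qed.
Lemma comm13 (A B : 'M[C]_4) : gate 4 1 A *m gate 4 3 B = gate 4 3 B *m gate 4 1 A.
Proof.
rewrite g41 g43; have H1 := @tensmx_mul _ _ _ _ _ _ _ A I4 I4 B.
have H2 := @tensmx_mul _ _ _ _ _ _ _ I4 B A I4.
rewrite !mulmx1 !mul1mx in H1 H2; exact: (etrans H1 (esym H2)).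
Qed.
Lemma liftR (X Y : 'M[C]_8) : (X *m Y) *t I2 = (X *t I2) *m (Y *t I2).
Proof. by rewrite tensmx_mul mulmx1. Qed.
Lemma liftL (X Y : 'M[C]_8) : I2 *t (X *m Y) = (I2 *t X) *m (I2 *t Y).
Proof. by rewrite tensmx_mul mulmx1. Qed.

Lemma liftR3 (X Y Z : 'M[C]_(2^3)) :
  (X *m Y *m Z) *t I2 = (X *t I2) *m (Y *t I2) *m (Z *t I2) :> 'M[C]_(2^4).
Proof.
have H1 := @tensmx_mul _ _ _ _ _ _ _ (X *m Y) I2 Z I2.
have H2 := @tensmx_mul _ _ _ _ _ _ _ X I2 Y I2.
rewrite mulmx1 in H1; rewrite mulmx1 in H2.
exact: (etrans (esym H1) (congr1 (fun M : 'M[C]_(2^4) => M *m (Z *t I2)) (esym H2))).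
Qed.
Lemma liftL3 (X Y Z : 'M[C]_(2^3)) :
  I2 *t (X *m Y *m Z) = (I2 *t X) *m (I2 *t Y) *m (I2 *t Z) :> 'M[C]_(2^4).
Proof.
have H1 := @tensmx_mul _ _ _ _ _ _ _ I2 (X *m Y) I2 Z.
have H2 := @tensmx_mul _ _ _ _ _ _ _ I2 X I2 Y.
rewrite mulmx1 in H1; rewrite mulmx1 in H2.
exact: (etrans (esym H1) (congr1 (fun M : 'M[C]_(2^4) => M *m (I2 *t Z)) (esym H2))).
Qed.

Lemma up123 (G1 G2 G3 G4 G5 G6 : 'M[C]_4) :
  gate 3 1 G1 *m gate 3 2 G2 *m gate 3 1 G3 = gate 3 2 G4 *m gate 3 1 G5 *m gate 3 2 G6 ->
  gate 4 1 G1 *m gate 4 2 G2 *m gate 4 1 G3 = gate 4 2 G4 *m gate 4 1 G5 *m gate 4 2 G6.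
Proof.
move=> H; have := congr1 (fun X : 'M[C]_(2^3) => X *t I2) H.
by rewrite /= !liftR3 -!r1 -!r2.
Qed.
Lemma up234 (G1 G2 G3 G4 G5 G6 : 'M[C]_4) :
  gate 3 1 G1 *m gate 3 2 G2 *m gate 3 1 G3 = gate 3 2 G4 *m gate 3 1 G5 *m gate 3 2 G6 ->
  gate 4 2 G1 *m gate 4 3 G2 *m gate 4 2 G3 = gate 4 3 G4 *m gate 4 2 G5 *m gate 4 3 G6.
Proof.
move=> H; have := congr1 (fun X : 'M[C]_(2^3) => I2 *t X) H.
by rewrite /= !liftL3 -!r3 -!r4.
Qed.

Lemma rassoc (a b c d e f : 'M[C]_(2^4)) : a *m b *m c = d *m e *m f ->
  forall X : 'M[C]_(2^4), a *m (b *m (c *m X)) = d *m (e *m (f *m X)).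
Proof. by move=> H X; rewrite !mulmxA H. Qed.
Lemma comm13' (A B : 'M[C]_4) (X : 'M[C]_(2^4)) :
  gate 4 1 A *m (gate 4 3 B *m X) = gate 4 3 B *m (gate 4 1 A *m X).
Proof. by rewrite !mulmxA comm13. Qed.

Theorem mainTheorem2 (S : 'M[C]_4 -> Prop) :
  (forall G, S G -> unitary G) ->
  (forall G1 G2 G3, S G1 -> S G2 -> S G3 ->
     exists G4 G5 G6, [/\ S G4, S G5, S G6 &
       gate 3 1 G1 *m gate 3 2 G2 *m gate 3 1 G3 =
       gate 3 2 G4 *m gate 3 1 G5 *m gate 3 2 G6]) ->
  (forall G4 G5 G6, S G4 -> S G5 -> S G6 ->
     exists G1 G2 G3, [/\ S G1, S G2, S G3 &
       gate 3 1 G1 *m gate 3 2 G2 *m gate 3 1 G3 =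
       gate 3 2 G4 *m gate 3 1 G5 *m gate 3 2 G6]) ->
  forall A1 A2 A3 A4 A5 A6, S A1 -> S A2 -> S A3 -> S A4 -> S A5 -> S A6 ->
  exists B1 B2 B3 B4 B5 B6,
    [/\ S B1, S B2 & S B3] /\ [/\ S B4, S B5 & S B6] /\
    gate 4 2 A6 *m gate 4 1 A5 *m gate 4 3 A4 *m gate 4 2 A3
      *m gate 4 1 A2 *m gate 4 3 A1 =
    gate 4 1 B6 *m gate 4 3 B5 *m gate 4 2 B4 *m gate 4 1 B3
      *m gate 4 3 B2 *m gate 4 2 B1.
Proof.
move=> _ F Bk A1 A2 A3 A4 A5 A6 s1 s2 s3 s4 s5 s6.
have [C4 [C5 [C6 [c4 c5 c6 /up123/rassoc HC]]]] := F A5 A3 A2 s5 s3 s2.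
have [D4 [D5 [D6 [d4 d5 d6 /up234/rassoc HD]]]] := F A6 A4 C4 s6 s4 c4.
have [E1 [E2 [E3 [e1 e2 e3 /up234/rassoc HE]]]] := Bk D6 C6 A1 d6 c6 s1.
have [F1 [F2 [F3 [f1 f2 f3 /up123/rassoc HF]]]] := Bk D5 C5 E1 d5 c5 e1.
exists E3, E2, F3, F2, D4, F1; split; first by split.
split; first by split.
have cm := comm13'.
move: cm HC HD HE HF; generalize (gate 4 1) (gate 4 2) (gate 4 3) => g1 g2 g3 cm HC HD HE HF.
rewrite -[LHS]mulmx1 -[RHS]mulmx1 -!mulmxA.
rewrite (cm A5 A4) HC HD -(cm C5 D6) -HE -HF.
by rewrite -(cm F1 D4).
Qed.
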